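(* For every integer $k\ge 5$, $R(k,k+1)\ge NPO(k) > T_k$, where $T_k=\frac{k(k+1)}{2}$ is the $k$-th triangular number.
   Context: All graphs are finite, simple and undirected; $A(G)$ denotes the adjacency matrix of $G$. Eigenvalues are counted with multiplicity. For a positive integer $k$, $NPO(k)$ is the smallest integer $n$ such that the adjacency matrix of every graph with at least $n$ vertices has at least $k$ nonpositive eigenvalues. The Ramsey number $R(m,n)$ is the minimum number $N$ such that every graph on at least $N$ vertices has either an independent set of size $m$ or an induced subgraph isomorphic to the complete graph $K_n$. *)

(* Defs.v *)
From HB Require Import structures.
From mathcomp Require Import all_boot all_order all_algebra all_field.
Set Implicit Arguments. Unset Strict Implicit. Unset Printing Implicit Defensive.
Import Order.TTheory GRing.Theory Num.Theory.

Definition simple_graph (n : nat) (e : rel 'I_n) : Prop :=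
  (forall x y, e x y = e y x) /\ (forall x, ~~ e x x).

Definition adjmx (n : nat) (e : rel 'I_n) : 'M[algC]_n :=
  \matrix_(i, j) ((e i j)%:R : algC)%R.

(* the eigenvalues of a square matrix, listed with multiplicity
   (roots of the characteristic polynomial over the algebraically closed algC) *)
Definition eigenvalues (n : nat) (A : 'M[algC]_n) : seq algC :=
  sval (closed_field_poly_normal (char_poly A)).

Definition num_nonpos_eig (n : nat) (A : 'M[algC]_n) : nat :=
  count (fun z : algC => (z <= 0)%R) (eigenvalues A).

Definition has_indep (n : nat) (e : rel 'I_n) (a : nat) : Prop :=
  exists S : {set 'I_n}, #|S| = a /\
    (forall x y, x \in S -> y \in S -> x != y -> ~~ e x y).
Definition has_clique (n : nat) (e : rel 'I_n) (b : nat) : Prop :=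
  exists S : {set 'I_n}, #|S| = b /\
    (forall x y, x \in S -> y \in S -> x != y -> e x y).

Definition is_least (P : nat -> Prop) (N : nat) : Prop :=
  P N /\ (forall M, P M -> N <= M).

Definition ramsey_prop (a b N : nat) : Prop :=
  forall n, N <= n -> forall e : rel 'I_n, simple_graph e ->
    has_indep e a \/ has_clique e b.

Definition is_ramsey_number (a b N : nat) : Prop := is_least (ramsey_prop a b) N.

Definition npo_prop (k N : nat) : Prop :=
  forall n, N <= n -> forall e : rel 'I_n, simple_graph e ->
    k <= num_nonpos_eig (adjmx e).

Definition is_NPO (k N : nat) : Prop := is_least (npo_prop k) N.

(* Main.v *)
Require Import Defs.
From HB Require Import structures.
From mathcomp Require Import all_boot all_order all_algebra all_field.
From mathcomp Require Import zify ring lra.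
From Stdlib Require Import Classical.
Set Implicit Arguments. Unset Strict Implicit. Unset Printing Implicit Defensive.

Module Spec.
Import Order.TTheory GRing.Theory Num.Theory Num.Def.
Local Open Scope ring_scope.
Local Open Scope sesquilinear_scope.

Lemma adjmx_herm n (e : rel 'I_n) : simple_graph e -> adjmx e \is hermsymmx.
Proof.
move=> [Hs _]; apply/is_hermitianmxP; rewrite expr0 scale1r.
by apply/matrixP => i j; rewrite !mxE Hs conjC_nat.
Qed.

Lemma spec_decomp n (A : 'M[algC]_n) : A \is hermsymmx ->
  exists (P : 'M[algC]_n) (d : 'rV[algC]_n), [/\ P \is unitarymx, d \is a realmx & A = P^t* *m diag_mx d *m P].
Proof.
move=> HA; exists (spectralmx A), (spectral_diag A); split.
- exact: spectral_unitarymx.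
- exact: hermitian_spectral_diag_real.
- rewrite -invmx_unitary ?spectral_unitarymx //.
  exact/orthomx_spectralP/hermitian_normalmx.
Qed.

Lemma char_poly_conj n (Q P D : 'M[algC]_n) : Q *m P = 1%:M ->
  char_poly (Q *m D *m P) = char_poly D.
Proof.
move=> QP; rewrite /char_poly /char_poly_mx !map_mxM.
set Q' := map_mx polyC Q; set P' := map_mx polyC P.
have QP' : Q' *m P' = 1%:M by rewrite -map_mxM QP map_mx1.
have E : ('X%:M : 'M[{poly algC}]_n) = Q' *m 'X%:M *m P'.
  by rewrite mul_mx_scalar -scalemxAl QP' scalemx1.
rewrite [X in \det (X - _)]E -mulmxBl -mulmxBr !det_mulmx mulrAC -det_mulmx QP' det1 mul1r.
done.
Qed.

Lemma count_index_enum (T : finType) (a : pred T) : count a (index_enum T) = #|a|.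
Proof. by rewrite cardE /enum_mem [index_enum T]unlock size_filter. Qed.

Lemma unitary_inv n (P : 'M[algC]_n) : P \is unitarymx -> P^t* *m P = 1%:M.
Proof. by move=> HP; rewrite -invmx_unitary // mulVmx // unitarymx_unit. Qed.

Lemma nonpos_count n (A P : 'M[algC]_n) (d : 'rV[algC]_n) :
  P \is unitarymx -> A = P^t* *m diag_mx d *m P ->
  num_nonpos_eig A = #|[set i | d 0 i <= 0]|.
Proof.
move=> HP ->; rewrite /num_nonpos_eig /eigenvalues.
case: closed_field_poly_normal => r /=.
rewrite char_poly_conj ?unitary_inv // (monicP (char_poly_monic _)) scale1r.
rewrite char_poly_trig ?diag_mx_is_trig //.
have -> : \prod_(i < n) ('X - (diag_mx d i i)%:P) =
   \prod_(z <- [seq d 0 i | i <- index_enum 'I_n]) ('X - z%:P).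
  by rewrite big_map; apply: eq_bigr => i _; rewrite mxE eqxx mulr1n.
move=> /esym /prod_XsubC_eq /permP ->.
by rewrite count_map count_index_enum; apply: eq_card => i; rewrite inE.
Qed.


Lemma exists_supported n m (I : {set 'I_n}) (N : 'M[algC]_(n, m)) :
  (\rank N < #|I|)%N ->
  exists y : 'rV[algC]_n, [/\ y != 0, (forall i, i \notin I -> y 0 i = 0) & y *m N = 0].
Proof.
move=> HI.
pose EI : 'M[algC]_(#|I|, n) := \matrix_(j, c) ((enum_val j == c)%:R).
have EE : EI *m EI^T = 1%:M.
  apply/matrixP => j1 j2; rewrite !mxE (bigD1 (enum_val j1)) //= big1.
    rewrite !mxE eqxx mul1r addr0; congr (_%:R).
    by rewrite (inj_eq enum_val_inj) eq_sym.
  by move=> c /negbTE Hc; rewrite !mxE eq_sym Hc mul0r.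
have rEI : \rank EI = #|I|.
  apply/eqP; rewrite eqn_leq rank_leq_row /=.
  by rewrite -{1}(mxrank1 algC #|I|) -EE mxrankM_maxl.
set K := kermx N.
have rK : \rank K = (n - \rank N)%N by rewrite mxrank_ker.
have hsum := mxrank_sum_cap EI K.
have hle : (\rank (EI + K)%MS <= n)%N by apply: rank_leq_col.
have hcap : (\rank (EI :&: K)%MS != 0)%N.
  have : (\rank N <= n)%N by apply: rank_leq_row.
  have : (#|I| <= n)%N by rewrite -[X in (_ <= X)%N]card_ord max_card.
  lia.
move: hcap; rewrite mxrank_eq0 -nz_row_eq0 => Hz.
set y := nz_row _ in Hz.
have Hy1 : (y <= EI)%MS := submx_trans (nz_row_sub _) (capmxSl _ _).
have Hy2 : (y <= K)%MS := submx_trans (nz_row_sub _) (capmxSr _ _).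
exists y; split => //.
- move=> i Hi; case/submxP: Hy1 => D ->; rewrite mxE big1 // => j _.
  rewrite mxE; case: eqP => [Ej|_]; last by rewrite mulr0.
  by move: Hi; rewrite -Ej enum_valP.
- exact/sub_kermxP.
Qed.

Definition qf n (A : 'M[algC]_n) (x : 'rV[algC]_n) : algC := (x *m A *m x^t*) 0 0.

Lemma qf_diag n (A P : 'M[algC]_n) (d y : 'rV[algC]_n) :
  P \is unitarymx -> A = P^t* *m diag_mx d *m P ->
  qf A (y *m P) = \sum_i d 0 i * (y 0 i * (y 0 i)^*).
Proof.
move=> /unitarymxP HP ->; rewrite /qf trmx_mul map_mxM !mulmxA.
rewrite -(mulmxA y P) HP mulmx1 -(mulmxA _ P) HP mulmx1.
rewrite mxE; apply: eq_bigr => i _; rewrite mul_mx_diag !mxE.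
by rewrite mulrAC mulrC.
Qed.

Lemma unitary_mul_eq0 n (P : 'M[algC]_n) (y : 'rV[algC]_n) :
  P \is unitarymx -> (y *m P == 0) = (y == 0).
Proof.
move=> /unitarymxP HP; apply/eqP/eqP => [H|->]; last by rewrite mul0mx.
by rewrite -(mulmx1 y) -HP mulmxA H mul0mx.
Qed.

Lemma key_neg n m (A : 'M[algC]_n) (M : 'M[algC]_(n, m)) :
  A \is hermsymmx ->
  (forall x, x *m M = 0 -> x != 0 -> 0 < qf A x) ->
  (num_nonpos_eig A <= \rank M)%N.
Proof.
move=> HA Hpos; have [P [d [HP Hd HAe]]] := spec_decomp HA.
rewrite (nonpos_count HP HAe); rewrite leqNgt; apply/negP => Hlt.
have Hr : (\rank (P *m M) < #|[set i | (d 0 i <= 0)%R]|)%N.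
  exact: leq_ltn_trans (mxrankM_maxr _ _) Hlt.
have [y [ynz ysupp yM]] := exists_supported Hr.
have := Hpos (y *m P); rewrite -mulmxA yM unitary_mul_eq0 // => /(_ erefl ynz).
rewrite (qf_diag _ HP HAe) => /lt_geF/negbT/negP; apply.
apply: sumr_le0 => i _; case: (boolP (i \in [set i | (d 0 i <= 0)%R])) => Hi.
  by apply: mulr_le0_ge0; [move: Hi; rewrite inE | exact: mul_conjC_ge0].
by rewrite ysupp // mul0r mulr0.
Qed.

Lemma key_pos n m (A : 'M[algC]_n) (M : 'M[algC]_(n, m)) :
  A \is hermsymmx ->
  (forall x, x *m M = 0 -> qf A x <= 0) ->
  (n - \rank M <= num_nonpos_eig A)%N.
Proof.
move=> HA Hneg; have [P [d [HP Hd HAe]]] := spec_decomp HA.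
rewrite (nonpos_count HP HAe); rewrite leqNgt; apply/negP => Hlt.
set I := [set i | ~~ (d 0 i <= 0)%R].
have cI : #|I| = (n - #|[set i | (d 0 i <= 0)%R]|)%N.
  have H := cardC [set i | (d 0 i <= 0)%R]; rewrite card_ord in H.
  have -> : #|I| = #|[predC [set i | (d 0 i <= 0)%R]]|.
    by apply: eq_card => i; rewrite !inE.
  lia.
have Hr : (\rank (P *m M) < #|I|)%N.
  apply: leq_ltn_trans (mxrankM_maxr _ _) _; rewrite cI.
  have : (#|[set i | (d 0 i <= 0)%R]| <= n)%N by rewrite -[X in (_ <= X)%N]card_ord max_card.
  lia.
have [y [ynz ysupp yM]] := exists_supported Hr.
have := Hneg (y *m P); rewrite -mulmxA yM => /(_ erefl).
rewrite (qf_diag _ HP HAe); apply/negP/negbT/lt_geF.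
have dreal i : d 0 i \is Num.real by apply: (mxOverP Hd).
have [i0 Hi0] : exists i0, y 0 i0 != 0.
  apply/existsP; apply: contraR ynz => /existsPn H.
  by apply/eqP/rowP => j; rewrite mxE; apply/eqP; have := H j; rewrite negbK.
have i0I : i0 \in I by apply: contraR Hi0 => /ysupp ->; rewrite eqxx.
have dpos i : i \in I -> 0 < d 0 i.
  by rewrite inE => H; rewrite real_ltNge ?real0 ?dreal.
rewrite (bigD1 i0) //=; apply: ltr_pwDl.
  by apply: mulr_gt0; [exact: dpos | rewrite mul_conjC_gt0].
apply: sumr_ge0 => i _; case: (boolP (i \in I)) => Hi.
  by apply: mulr_ge0; [exact/ltW/dpos | exact: mul_conjC_ge0].
by rewrite ysupp // mul0r mulr0.
Qed.

Definition Vp k : {pred {set 'I_k}} := fun S : {set 'I_k} => (0 < #|S| <= 2)%N.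

Arguments Vp k : clear implicits.
Section Constr.
Variable k : nat.
Notation n := #|Vp k|.
Definition vs (u : 'I_n) : {set 'I_k} := enum_val u.
Definition isP (u : 'I_n) : bool := #|vs u| == 2%N.
Definition gadj : rel 'I_n := fun u v =>
  (u != v) && ((isP u == isP v) == [disjoint vs u & vs v]).

Lemma gadj_simple : simple_graph gadj.
Proof.
split => [u v|u]; last by rewrite /gadj eqxx.
by rewrite /gadj eq_sym disjoint_sym [isP v == _]eq_sym.
Qed.

Lemma vs_card u : #|vs u| = 1%N \/ #|vs u| = 2%N.
Proof. have := enum_valP u; rewrite /vs /Vp unfold_in /=; lia. Qed.

Lemma vs_inj : injective vs.
Proof. exact: enum_val_inj. Qed.

Lemma cap_card (S T : {set 'I_k}) : S != T -> (#|S| <= 2)%N -> (#|T| <= 2)%N ->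
  #|S :&: T| = nat_of_bool (~~ [disjoint S & T]).
Proof.
move=> ST hS hT; rewrite -setI_eq0 -cards_eq0.
case: (posnP #|S :&: T|) => [->//|h0] /=.
have : (#|S :&: T| < 2)%N.
  rewrite ltnNge; apply/negP => h2; move/negP: ST; apply; apply/eqP.
  have e1 : S :&: T = S.
    by apply/eqP; rewrite eqEcard subsetIl (leq_trans hS h2).
  have e2 : S :&: T = T.
    by apply/eqP; rewrite eqEcard subsetIr (leq_trans hT h2).
  by rewrite -e1 e2.
by move=> h2; apply/eqP; rewrite eqn_leq -ltnS h2 h0.
Qed.

Lemma single_disj (S T : {set 'I_k}) : #|S| = 1%N -> #|T| = 1%N -> S != T ->
  [disjoint S & T].
Proof.
move=> hS hT ST; rewrite -setI_eq0 -cards_eq0; apply/eqP.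
case: (posnP #|S :&: T|) => [//|h0].
move/negP: ST; case; apply/eqP.
have e1 : S :&: T = S by apply/eqP; rewrite eqEcard subsetIl hS.
have e2 : S :&: T = T by apply/eqP; rewrite eqEcard subsetIr hT.
by rewrite -e1 e2.
Qed.

Definition sgn (u : 'I_n) : algC := if isP u then 1 else -1.
Definition Bm : 'M[algC]_(n, k) := \matrix_(u, c) (sgn u * (c \in vs u)%:R).
Definition P1 : 'M[algC]_(n, 1) := \matrix_(u, j) (isP u)%:R.
Definition S1 : 'M[algC]_(n, 1) := \matrix_(u, j) (~~ isP u)%:R.
Definition Dp : 'M[algC]_n := diag_mx (\row_u (isP u)%:R).

Lemma sum_ind (A : {set 'I_k}) : \sum_c ((c \in A)%:R : algC) = #|A|%:R.
Proof.
rewrite (bigID (mem A)) /= [X in _ + X]big1 ?addr0; last by move=> c /negbTE ->.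
by rewrite (eq_bigr (fun _ => 1)) => [|c ->//]; rewrite sumr_const.
Qed.

Lemma BBT u v : (Bm *m Bm^T) u v = sgn u * sgn v * #|vs u :&: vs v|%:R.
Proof.
rewrite mxE -sum_ind mulr_sumr; apply: eq_bigr => c _; rewrite !mxE inE.
by case: (c \in vs u); case: (c \in vs v); rewrite /= ?mulr0 ?mul0r ?mulr1 // mulrAC.
Qed.

Lemma adj_decomp : adjmx gadj = P1 *m P1^T + S1 *m S1^T + Dp - Bm *m Bm^T.
Proof.
apply/matrixP => u v.
have -> : (P1 *m P1^T + S1 *m S1^T + Dp - Bm *m Bm^T) u v =
  (P1 *m P1^T) u v + (S1 *m S1^T) u v + Dp u v - (Bm *m Bm^T) u v by rewrite !mxE.
rewrite BBT !mxE !big_ord1 !mxE /gadj /sgn /isP.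
have hu := vs_card u; have hv := vs_card v.
have [->|uv] := eqVneq u v.
  rewrite eqxx /= setIid.
  by case: hv => ->; rewrite /= ?mulr1 ?mulr0; rewrite ?mulN1r ?opprK; ring.
rewrite /= mulr0n addr0.
have Suv : vs u != vs v by apply: contra uv => /eqP/vs_inj ->.
rewrite cap_card //; last by case: hv => ->.
  2: by case: hu => ->.
case: hu => hu; case: hv => hv; rewrite hu hv /=.
- by rewrite (single_disj hu hv Suv) /=; ring.
- by case: [disjoint _ & _] => /=; ring.
- by case: [disjoint _ & _] => /=; ring.
- by case: [disjoint _ & _] => /=; ring.
Qed.
End Constr.

Lemma qfD n (A B : 'M[algC]_n) x : qf (A + B) x = qf A x + qf B x.
Proof. by rewrite /qf mulmxDr mulmxDl mxE. Qed.
Lemma qfB n (A B : 'M[algC]_n) x : qf (A - B) x = qf A x - qf B x.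
Proof. by rewrite /qf mulmxBr mulmxBl mxE [(- (_ : 'M_(1,1))) 0 0]mxE. Qed.

Lemma qf_gram n p (G : 'M[algC]_(n, p)) x : G ^ conjC = G ->
  qf (G *m G^T) x = \sum_c (x *m G) 0 c * ((x *m G) 0 c)^*.
Proof.
move=> HG; rewrite /qf mulmxA -(mulmxA _ G^T).
have -> : G^T *m x^t* = (x *m G)^t* by rewrite trmx_mul map_mxM; congr (_ *m _); apply/matrixP => i j; rewrite !mxE; have := congr1 (fun M : 'M_(n,p) => M j i) HG; rewrite mxE.
by rewrite mxE; apply: eq_bigr => c _; rewrite !mxE.
Qed.

Lemma qf_diag_mx n (d : 'rV[algC]_n) x :
  qf (diag_mx d) x = \sum_i d 0 i * (x 0 i * (x 0 i)^*).
Proof.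
rewrite /qf mxE; apply: eq_bigr => i _; rewrite mul_mx_diag !mxE.
by rewrite mulrAC mulrC.
Qed.

Lemma sum_delta (m : nat) (f : 'I_m -> algC) (l : 'I_m) :
  \sum_c f c * (c == l)%:R = f l.
Proof.
rewrite (bigD1 l) //= eqxx mulr1 big1 ?addr0 // => c /negbTE ->.
by rewrite mulr0.
Qed.

Section Pos.
Variable k1 : nat.
Notation k := k1.+1.
Notation n := #|Vp k|.

Definition Em : 'M[algC]_(k, k1) :=
  \matrix_(c, j) ((c == lift ord0 j)%:R - (c == ord0)%:R).
Definition Mc : 'M[algC]_(n, k1) := Bm k *m Em.

Lemma P1_real : (P1 k) ^ conjC = P1 k.
Proof. by apply/matrixP => i j; rewrite !mxE conjC_nat. Qed.
Lemma S1_real : (S1 k) ^ conjC = S1 k.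
Proof. by apply/matrixP => i j; rewrite !mxE conjC_nat. Qed.
Lemma Bm_real : (Bm k) ^ conjC = Bm k.
Proof.
apply/matrixP => i j; rewrite !mxE rmorphM /= conjC_nat /sgn.
by case: (isP i); rewrite ?rmorph1 ?rmorphN1.
Qed.

Lemma w_sum (x : 'rV[algC]_n) :
  \sum_c (x *m Bm k) 0 c = 2 * (x *m P1 k) 0 0 - (x *m S1 k) 0 0.
Proof.
under eq_bigr do rewrite mxE.
rewrite exchange_big /= !mxE mulr_sumr -sumrB; apply: eq_bigr => u _.
rewrite -mulr_sumr.
under eq_bigr do rewrite mxE.
rewrite -mulr_sumr sum_ind !mxE /sgn /isP.
by case: (vs_card u) => ->; rewrite /=; ring.
Qed.

Lemma qf_split (x : 'rV[algC]_n) :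
  qf (adjmx (gadj (k := k))) x =
  (x *m P1 k) 0 0 * ((x *m P1 k) 0 0)^* + (x *m S1 k) 0 0 * ((x *m S1 k) 0 0)^*
  + qf (Dp k) x - \sum_c (x *m Bm k) 0 c * ((x *m Bm k) 0 c)^*.
Proof.
rewrite adj_decomp qfB !qfD !qf_gram ?P1_real ?S1_real ?Bm_real //.
by rewrite !big_ord1.
Qed.


Lemma w_const (x : 'rV[algC]_n) : x *m Mc = 0 ->
  forall c, (x *m Bm k) 0 c = (x *m Bm k) 0 ord0.
Proof.
move=> H c; have Hj j : (x *m Bm k) 0 (lift ord0 j) = (x *m Bm k) 0 ord0.
  have := congr1 (fun M : 'rV_k1 => M 0 j) H; rewrite /Mc mulmxA mxE [RHS]mxE.
  under eq_bigr do rewrite [Em _ _]mxE mulrBr.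
  rewrite sumrB !sum_delta => /eqP; rewrite subr_eq0 => /eqP //.
by case: (unliftP ord0 c) => [j ->|->].
Qed.

Lemma Dp_qf (x : 'rV[algC]_n) :
  qf (Dp k) x = \sum_u (isP u)%:R * (x 0 u * (x 0 u)^*).
Proof. by rewrite /Dp qf_diag_mx; apply: eq_bigr => u _; rewrite mxE. Qed.

Lemma construction_pos (x : 'rV[algC]_n) : (3 < k1)%N ->
  x *m Mc = 0 -> x != 0 -> 0 < qf (adjmx (gadj (k := k))) x.
Proof.
move=> hk Hx xnz.
set a := (x *m P1 k) 0 0; set b := (x *m S1 k) 0 0.
set p := qf (Dp k) x; set w0 := (x *m Bm k) 0 ord0.
have Hw := w_const Hx.
have Hs : k%:R * w0 = 2 * a - b.
  by rewrite -w_sum (eq_bigr _ (fun c _ => Hw c)) sumr_const card_ord mulr_natl.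
have Hsc : k%:R * w0^* = 2 * a^* - b^*.
  by have := congr1 conjC Hs; rewrite !rmorphM rmorphB /= rmorphM /= !conjC_nat.
have Hq : qf (adjmx (gadj (k := k))) x = a * a^* + b * b^* + p - k%:R * (w0 * w0^*).
  rewrite qf_split (eq_bigr _ (fun c _ => congr1 (fun z => z * z^*) (Hw c))).
  by rewrite sumr_const card_ord mulr_natl.
have p_ge0 : 0 <= p.
  rewrite /p Dp_qf; apply: sumr_ge0 => u _; apply: mulr_ge0 => //.
  exact: mul_conjC_ge0.
have kpos : 0 < (k%:R : algC) by rewrite ltr0n.
suff : 0 < k%:R * qf (adjmx (gadj (k := k))) x by rewrite pmulr_rgt0.
have -> : k%:R * qf (adjmx (gadj (k := k))) x =
  (k%:R - 5) * (a * a^* + b * b^*) + (a + 2 * b) * (a^* + 2 * b^*) + k%:R * p.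
  rewrite Hq.
  have -> : (k%:R : algC) * (a * a^* + b * b^* + p - k%:R * (w0 * w0^*)) =
    k%:R * (a * a^* + b * b^*) + k%:R * p - (k%:R * w0) * (k%:R * w0^*) by ring.
  rewrite Hs Hsc; ring.
have t1 : 0 <= (k%:R - 5 : algC) * (a * a^* + b * b^*).
  apply: mulr_ge0; last by apply: addr_ge0; exact: mul_conjC_ge0.
  by rewrite subr_ge0 ler_nat; lia.
have t2 : 0 <= (a + 2 * b) * (a^* + 2 * b^*).
  have -> : a^* + 2 * b^* = (a + 2 * b)^* by rewrite rmorphD rmorphM /= conjC_nat.
  exact: mul_conjC_ge0.
have [p0|pnz] := eqVneq p 0; last first.
  have pp : 0 < p by rewrite lt0r pnz p_ge0.
  by rewrite -addrA ltr_wpDl // ltr_wpDl // mulr_gt0.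
rewrite p0 mulr0 addr0.
have xP u : isP u -> x 0 u = 0.
  move=> hu; move: p0; rewrite /p Dp_qf => /psumr_eq0P.
  have hge v : true -> 0 <= (isP v)%:R * (x 0 v * (x 0 v)^*).
    by move=> _; apply: mulr_ge0 => //; exact: mul_conjC_ge0.
  move=> /(_ hge u isT); rewrite hu mul1r => /eqP; rewrite mul_conjC_eq0 => /eqP //.
have a0 : a = 0.
  rewrite /a mxE big1 // => u _; rewrite mxE.
  by case hu: (isP u); rewrite ?mulr0 // xP ?mul0r.
have [u xu] : exists u, x 0 u != 0.
  apply/existsP; apply: contraR xnz => /existsPn H.
  by apply/eqP/rowP => j; rewrite mxE; apply/eqP; have := H j; rewrite negbK.
have uS : isP u = false by apply: contraTF xu => /xP ->; rewrite eqxx.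
have [c Hc] : exists c, vs u = [set c].
  by apply/cards1P; move: uS; rewrite /isP; case: (vs_card u) => ->.
have wc : (x *m Bm k) 0 c = - x 0 u.
  rewrite mxE (bigD1 u) //= big1 ?addr0.
    by rewrite mxE /sgn uS Hc set11 mulr1 mulrN1.
  move=> v vu; rewrite mxE; case hv: (isP v); first by rewrite xP // mul0r.
  case cv: (c \in vs v); last by rewrite /= mulr0n !mulr0.
  exfalso; move/negP: vu; apply; apply/eqP/vs_inj; rewrite Hc.
  have [c' Hc'] : exists c', vs v = [set c'].
    by apply/cards1P; move: hv; rewrite /isP; case: (vs_card v) => ->.
  by move: cv; rewrite Hc' inE => /eqP ->.
have w0nz : w0 != 0 by rewrite /w0 -(Hw c) wc oppr_eq0.
have ab : a + 2 * b = - (2 * (k%:R * w0)).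
  by rewrite Hs a0; ring.
have abnz : a + 2 * b != 0.
  by rewrite ab oppr_eq0 !mulf_neq0 // ?pnatr_eq0 // lt0r_neq0.
apply: ltr_wpDl => //.
have -> : a^* + 2 * b^* = (a + 2 * b)^* by rewrite rmorphD rmorphM /= conjC_nat.
by rewrite mul_conjC_gt0.
Qed.

End Pos.

Lemma card_Vp k : #|Vp k| = (k + 'C(k, 2))%N.
Proof.
have -> : #|Vp k| = #|[predU [set S : {set 'I_k} | #|S| == 1%N] & [set S : {set 'I_k} | #|S| == 2%N]]|.
  apply: eq_card => S; rewrite !inE /Vp unfold_in /=.
  case: #|S| => [|[|[|m]]] //.
have := cardUI [set S : {set 'I_k} | #|S| == 1%N] [set S : {set 'I_k} | #|S| == 2%N].
have -> : #|[predI [set S : {set 'I_k} | #|S| == 1%N] & [set S : {set 'I_k} | #|S| == 2%N]]| = 0%N.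
  by apply: eq_card0 => S; rewrite !inE; case: (#|S|) => [|[|[|]]].
by rewrite addn0 => ->; rewrite !card_draws card_ord bin1.
Qed.

Lemma lower_bound k N : (5 <= k)%N -> npo_prop k N -> (k * k.+1 %/ 2 < N)%N.
Proof.
case: k => [//|k1] hk HN; rewrite ltnNge; apply/negP => hN.
have hn : (N <= #|Vp k1.+1|)%N.
  apply: leq_trans hN _; rewrite card_Vp bin2 -divn2 /=.
  have -> : (k1.+1 * k1.+2 = k1.+1 * k1 + 2 * k1.+1)%N by ring.
  by rewrite divnDr ?dvdn_mulr // mulKn // addnC.
have hk1 : (3 < k1)%N by lia.
have := HN _ hn _ (gadj_simple k1.+1).
have := key_neg (adjmx_herm (gadj_simple k1.+1)) (M := Mc k1) _.
have rk : (\rank (Mc k1) <= k1)%N by apply: rank_leq_col.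
move=> /(_ (fun x Hx xnz => construction_pos hk1 Hx xnz)).
lia.
Qed.

Lemma qf_expand n (A : 'M[algC]_n) x :
  qf A x = \sum_i \sum_j x 0 i * A i j * (x 0 j)^*.
Proof.
rewrite /qf mxE exchange_big /=; apply: eq_bigr => j _.
by rewrite !mxE mulr_suml.
Qed.

Definition suppM n (S : {set 'I_n}) : 'M[algC]_(n, #|~: S|) :=
  \matrix_(i < n, j < #|~: S|) ((i == enum_val j)%:R).

Lemma suppM_rank n (S : {set 'I_n}) : (\rank (suppM S) <= n - #|S|)%N.
Proof.
apply: leq_trans (rank_leq_col _) _.
have := cardsC S; rewrite card_ord; lia.
Qed.

Lemma suppM_ker n (S : {set 'I_n}) (x : 'rV[algC]_n) : x *m suppM S = 0 -> forall i, i \notin S -> x 0 i = 0.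
Proof.
move=> H i Hi; have Hi' : i \in ~: S by rewrite inE.
have := congr1 (fun M : 'rV_#|~: S| => M 0 (enum_rank_in Hi' i)) H.
rewrite !mxE (bigD1 i) //= big1 ?addr0.
  by rewrite mxE enum_rankK_in // eqxx mulr1.
by move=> l li; rewrite mxE enum_rankK_in // (negbTE li) mulr0.
Qed.

Lemma ramsey_npo k R : ramsey_prop k k.+1 R -> npo_prop k R.
Proof.
move=> HR n hn e He; have HA := adjmx_herm He.
have [Hsym Hirr] := He.
case: (HR n hn e He) => [[S [cS HS]]|[C [cC HC]]].
- have Hq : forall x, x *m suppM S = 0 -> qf (adjmx e) x <= 0.
    move=> x Hx; rewrite qf_expand big1 // => i _; rewrite big1 // => j _.
    case iS: (i \in S); last by rewrite (suppM_ker Hx) ?iS // !mul0r.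
    case jS: (j \in S); last by rewrite (suppM_ker Hx (i := j)) ?jS // rmorph0 mulr0.
    rewrite mxE; have [<-|ij] := eqVneq i j; first by rewrite (negbTE (Hirr i)) mulr0 mul0r.
    by rewrite (negbTE (HS _ _ iS jS ij)) mulr0 mul0r.
  have := key_pos HA Hq; have := suppM_rank S.
  have : (#|S| <= n)%N by rewrite -[X in (_ <= X)%N]card_ord max_card.
  lia.
- pose M' := row_mx (suppM C) (\col_i (((i \in C)%:R) : algC)).
  have Hq : forall x, x *m M' = 0 -> qf (adjmx e) x <= 0.
    move=> x; rewrite mul_mx_row => /eqP; rewrite row_mx_eq0 => /andP [/eqP H1 /eqP H2].
    have xC j : j \notin C -> x 0 j = 0 by exact: (suppM_ker H1 (i := j)).
    have sum0 : \sum_j x 0 j = 0.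
      have H2' := congr1 (fun M : 'M_1 => M 0 0) H2; rewrite /= !mxE in H2'.
      rewrite -[X in _ = X]H2'.
      apply: eq_bigr => j _; rewrite mxE.
      by case jC: (j \in C); rewrite ?mulr1 // xC ?jC // mul0r.
    have term i j : x 0 i * adjmx e i j * (x 0 j)^* =
        x 0 i * (x 0 j)^* - x 0 i * (x 0 j)^* * (j == i)%:R.
      case iC: (i \in C); last by rewrite xC ?iC // !mul0r subrr.
      case jC: (j \in C); last by rewrite (xC j) ?jC // rmorph0 !mulr0 mul0r subrr.
      rewrite mxE; have [<-|ij] := eqVneq i j.
        by rewrite (negbTE (Hirr i)) /= mulr0n mulr0 mul0r mulr1 subrr.
      by rewrite (HC _ _ iC jC ij) /= mulr0n !mulr1 mulr0 subr0.
    rewrite qf_expand.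
    under eq_bigr do under eq_bigr do rewrite term.
    under eq_bigr do rewrite sumrB sum_delta -mulr_sumr -rmorph_sum sum0 rmorph0 mulr0 sub0r.
    rewrite sumrN oppr_le0; apply: sumr_ge0 => i _; exact: mul_conjC_ge0.
  have := key_pos HA Hq.
  have rk : (\rank M' <= #|~: C| + 1)%N by apply: rank_leq_col.
  have := cardsC C; rewrite card_ord.
  lia.
Qed.

End Spec.
Import Spec.

Module Ram.
Definition indepS n (e : rel 'I_n) (S : {set 'I_n}) :=
  forall x y, x \in S -> y \in S -> x != y -> ~~ e x y.
Definition cliqueS n (e : rel 'I_n) (S : {set 'I_n}) :=
  forall x y, x \in S -> y \in S -> x != y -> e x y.

Lemma ramsey_set a b : exists N, forall n (e : rel 'I_n), simple_graph e ->
  forall X : {set 'I_n}, (N <= #|X|)%N ->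
  (exists S : {set 'I_n}, [/\ S \subset X, #|S| = a & indepS e S]) \/
  (exists S : {set 'I_n}, [/\ S \subset X, #|S| = b & cliqueS e S]).
Proof.
elim: a b => [|a IHa] b.
  exists 0%N => n e He X _; left; exists set0; split; rewrite ?sub0set ?cards0 //.
  by move=> x y; rewrite inE.
elim: b => [|b IHb].
  exists 0%N => n e He X _; right; exists set0; split; rewrite ?sub0set ?cards0 //.
  by move=> x y; rewrite inE.
have [N1 H1] := IHa b.+1; have [N2 H2] := IHb.
exists (N1 + N2).+1 => n e [Hsym Hirr] X hX.
have : (0 < #|X|)%N by lia.
rewrite card_gt0 => /set0Pn [v vX].
set X' := X :\ v; set B := [set y | e v y].
have cX : #|X| = #|X'|.+1 by rewrite (cardsD1 v X) vX.
have cX' := cardsID B X'.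
have [hm|hn] : (N1 <= #|X' :\: B|)%N \/ (N2 <= #|X' :&: B|)%N.
  case: (leqP N1 #|X' :\: B|) => h; [by left | right].
  move: cX cX' hX h; move: #|X'| #|X' :&: B| #|X' :\: B| #|X| => p q r t; lia.
- case: (H1 n e (conj Hsym Hirr) _ hm) => [[S [SX cS HS]]|[S [SX cS HS]]].
    left; exists (v |: S).
    have vS : v \notin S.
      by apply/negP => /(subsetP SX); rewrite !inE eqxx /= andbF.
    split.
    + apply/subsetP => x; rewrite !inE => /orP [/eqP ->//|/(subsetP SX)].
      by rewrite !inE => /andP [_ /andP [_ ->]].
    + by rewrite cardsU1 vS cS.
    + move=> x y; rewrite !inE => /orP [/eqP ->|xS] /orP [/eqP ->|yS] xy.
      * by rewrite eqxx in xy.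
      * by move/(subsetP SX): yS; rewrite !inE => /andP [].
      * by rewrite Hsym; move/(subsetP SX): xS; rewrite !inE => /andP [].
      * exact: HS.
  right; exists S; split => //; apply: subset_trans SX _.
  by apply/subsetP => x; rewrite !inE => /andP [_ /andP [_ ->]].
- case: (H2 n e (conj Hsym Hirr) _ hn) => [[S [SX cS HS]]|[S [SX cS HS]]].
    left; exists S; split => //; apply: subset_trans SX _.
    by apply/subsetP => x; rewrite !inE => /andP [/andP [_ ->]].
  right; exists (v |: S).
  have vS : v \notin S.
    by apply/negP => /(subsetP SX); rewrite !inE eqxx.
  split.
  + apply/subsetP => x; rewrite !inE => /orP [/eqP ->//|/(subsetP SX)].
    by rewrite !inE => /andP [/andP [_ ->]].
  + by rewrite cardsU1 vS cS.
  + move=> x y; rewrite !inE => /orP [/eqP ->|xS] /orP [/eqP ->|yS] xy.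
    * by rewrite eqxx in xy.
    * by move/(subsetP SX): yS; rewrite !inE => /andP [].
    * by rewrite Hsym; move/(subsetP SX): xS; rewrite !inE => /andP [].
    * exact: HS.
Qed.

Lemma ramsey_exists a b : exists N, ramsey_prop a b N.
Proof.
have [N HN] := ramsey_set a b; exists N => n hn e He.
case: (HN n e He setT); first by rewrite cardsT card_ord.
  by move=> [S [_ cS HS]]; left; exists S.
by move=> [S [_ cS HS]]; right; exists S.
Qed.

Lemma ex_least (P : nat -> Prop) : (exists n, P n) -> exists N, is_least P N.
Proof.
move=> [n Pn]; elim: n {-2}n (leqnn n) Pn => [|m IH] n hn Pn.
  exists n; split => // M _; lia.
case: (classic (exists n', (n' < n)%N /\ P n')) => [[n' [hn' Pn']]|H].
  apply: (IH n') => //; lia.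
exists n; split => // M PM; rewrite leqNgt; apply/negP => hM.
by apply: H; exists M.
Qed.

End Ram.
Import Ram.

Theorem mainTheorem12 (k : nat) (hk : 5 <= k) :
  exists R N : nat, is_ramsey_number k k.+1 R /\ is_NPO k N /\
    N <= R /\ k * k.+1 %/ 2 < N.
Proof.
have [R [HR Rmin]] := ex_least (ramsey_exists k k.+1).
have HNR : npo_prop k R := ramsey_npo HR.
have [N [HN Nmin]] := ex_least (ex_intro _ R HNR).
exists R, N; split; first by split.
split; first by split.
split; first exact: Nmin.
exact: lower_bound hk HN.
Qed.
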